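(* Let $1\le k\le n$ and let $f:\mathbb{F}_2^n\to\mathbb{F}_2$ be a function of algebraic degree exactly $k$. Then \[\prod_{i=1}^{k}\Big(1-\frac{1}{2^i}\Big)\le\mathrm{dt}_k(f)\le\frac12\Big(1-\frac{1}{2^n}\Big)^{k-1}.\] Moreover, the lower bound is attained if and only if $f\sim_{k-1}x_1\cdots x_k$.
   Context: $\oplus$ denotes addition in $\mathbb{F}_2$ and $\mathbb{F}_2^n$. The algebraic degree $\deg(f)$ of $f:\mathbb{F}_2^n\to\mathbb{F}_2$ is the degree of its algebraic normal form (the unique polynomial over $\mathbb{F}_2$ of degree at most one in each variable representing $f$). For $1\le k\le n$, \[\mathrm{dt}_k(f)=\frac{\big|\{(u_0,\dots,u_k)\in(\mathbb{F}_2^n)^{k+1}:\ \bigoplus_{c_1,\dots,c_k\in\mathbb{F}_2} f\big((\bigoplus_{i=1}^k c_iu_i)\oplus u_0\big)\neq0\}\big|}{2^{(k+1)n}}.\] For $M\in GL(n,\mathbb{F}_2)$, $v\in\mathbb{F}_2^n$, $\varphi_{M,v}(x)=Mx\oplus v$; $f\sim g$ means $g=f\circ\varphi_{M,v}$ for some such $M,v$; and $f\sim_{k-1}g$ means there is $h$ with $f\sim h$ and $\deg(g\oplus h)\le k-1$. *)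

(* Defs.v *)
From HB Require Import structures.
From mathcomp Require Import all_boot all_order all_algebra.
Set Implicit Arguments. Unset Strict Implicit. Unset Printing Implicit Defensive.
Import Order.TTheory GRing.Theory Num.Theory.
Local Open Scope ring_scope.

Notation vec n := 'cV['F_2]_n.
Notation boolfun n := (vec n -> 'F_2).

(* f is represented by the polynomial (ANF)
   sum_{S} a_S prod_{i in S} x_i  with all monomials of degree <= d.
   By uniqueness of the ANF this says deg(f) <= d. *)
Definition anf_eval n (a : {set 'I_n} -> 'F_2) (x : vec n) : 'F_2 :=
  \sum_(S : {set 'I_n}) a S * \prod_(i in S) x i 0.

Definition deg_le n (f : boolfun n) (d : nat) : Prop :=
  exists a : {set 'I_n} -> 'F_2,
    (forall S, a S != 0 -> (#|S| <= d)%N) /\ (forall x, f x = anf_eval a x).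

Definition deg_eq n (f : boolfun n) (d : nat) : Prop :=
  deg_le f d /\ ~ deg_le f d.-1.

Definition kder n k (f : boolfun n) (u0 : vec n) (u : {ffun 'I_k -> vec n}) : 'F_2 :=
  \sum_(c : {ffun 'I_k -> 'F_2}) f (\sum_(i < k) c i *: u i + u0).

Definition dt n k (f : boolfun n) : rat :=
  (#|[set p : vec n * {ffun 'I_k -> vec n} | kder f p.1 p.2 != 0]|)%:R
  / (2 ^ ((k.+1) * n))%:R.

Definition affeq n (f g : boolfun n) : Prop :=
  exists (M : 'M['F_2]_n) (v : vec n),
    M \in unitmx /\ forall x, g x = f (M *m x + v).

Definition affeq_mod n (d : nat) (f g : boolfun n) : Prop :=
  exists h : boolfun n, affeq f h /\ deg_le (fun x => g x + h x) d.

(* the monomial x_1 ... x_k (0-indexed: coordinates 0..k-1) *)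
Definition monom n (k : nat) : boolfun n :=
  fun x => \prod_(i < n | (i < k)%N) x i 0.

(* Main.v *)
Require Import Defs.
From HB Require Import structures.
From mathcomp Require Import all_boot all_order all_algebra.
From mathcomp Require Import perm.
From mathcomp Require Import ring.
From Stdlib Require Import FunctionalExtensionality.
Set Implicit Arguments. Unset Strict Implicit. Unset Printing Implicit Defensive.
Import Order.TTheory GRing.Theory Num.Theory.
Local Open Scope ring_scope.
From mathcomp Require Import lra.

Lemma F2_cases (x : 'F_2) : x = 0 \/ x = 1.
Proof. case: x => [[|[|m]] Hm]; [left|right|]; try by apply/val_inj. by []. Qed.
Lemma F2_addxx (x : 'F_2) : x + x = 0.
Proof. by case: (F2_cases x) => ->; apply/val_inj. Qed.
Lemma F2_neq0 (x : 'F_2) : x != 0 -> x = 1.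
Proof. by case: (F2_cases x) => ->. Qed.
Lemma sumF2 (R : zmodType) (F : 'F_2 -> R) : \sum_(b : 'F_2) F b = F 0 + F 1.
Proof. rewrite /= big_ord_recl big_ord_recl big_ord0 addr0. congr (F _ + F _); by apply/val_inj. Qed.
Lemma vec_addxx n (v : vec n) : v + v = 0.
Proof. by apply/matrixP => i j; rewrite !mxE F2_addxx. Qed.
Lemma vec_addK n (v w : vec n) : v + w + w = v.
Proof. by rewrite -addrA vec_addxx addr0. Qed.

Section FF.
Variable T : finType.
Definition fcons k (t : T) (u : {ffun 'I_k -> T}) : {ffun 'I_k.+1 -> T} :=
  [ffun i => if unlift ord0 i is Some j then u j else t].
Definition ftl k (u : {ffun 'I_k.+1 -> T}) : {ffun 'I_k -> T} := [ffun j => u (lift ord0 j)].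
Lemma fcons0 k t (u : {ffun 'I_k -> T}) : fcons t u ord0 = t.
Proof. by rewrite ffunE unlift_none. Qed.
Lemma fconsS k t (u : {ffun 'I_k -> T}) j : fcons t u (lift ord0 j) = u j.
Proof. by rewrite ffunE liftK. Qed.
Lemma ftl_fcons k t (u : {ffun 'I_k -> T}) : ftl (fcons t u) = u.
Proof. by apply/ffunP => j; rewrite ffunE fconsS. Qed.
Lemma fcons_eta k (u : {ffun 'I_k.+1 -> T}) : fcons (u ord0) (ftl u) = u.
Proof.
apply/ffunP => i; rewrite ffunE; case: unliftP => [j ->|->] //.
by rewrite ffunE.
Qed.
Lemma big_ffunS (R : Type) (idx : R) (op : Monoid.com_law idx) k
  (F : {ffun 'I_k.+1 -> T} -> R) :
  \big[op/idx]_(u : {ffun 'I_k.+1 -> T}) F u =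
  \big[op/idx]_(t : T) \big[op/idx]_(u : {ffun 'I_k -> T}) F (fcons t u).
Proof.
rewrite pair_big /= (reindex (fun p : T * {ffun 'I_k -> T} => fcons p.1 p.2)) /=.
  by apply: eq_bigr => -[t u] _.
exists (fun u : {ffun 'I_k.+1 -> T} => (u ord0, ftl u)) => [[t u] _|u _] /=.
  by rewrite fcons0 ftl_fcons.
by rewrite fcons_eta.
Qed.
Lemma big_ffun0 (R : Type) (idx : R) (op : Monoid.com_law idx)
  (F : {ffun 'I_0 -> T} -> R) (u0 : {ffun 'I_0 -> T}) :
  \big[op/idx]_(u : {ffun 'I_0 -> T}) F u = F u0.
Proof.
by rewrite (big_pred1 u0) // => u /=; apply/esym/eqP/ffunP => -[].
Qed.
End FF.

Section Kder.
Variable n : nat.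
Implicit Types (g h : boolfun n) (v w x : vec n).

Definition D v g : boolfun n := fun x => g (x + v) + g x.
Definition Z k g := forall (u0 : vec n) (u : {ffun 'I_k -> vec n}), kder g u0 u = 0.

Lemma kder0 g u0 (u : {ffun 'I_0 -> vec n}) : kder g u0 u = g u0.
Proof.
rewrite /kder (big_ffun0 _ _ [ffun => 0]) big_ord0 add0r //.
Qed.

Lemma kderS k g u0 v (u : {ffun 'I_k -> vec n}) :
  kder g u0 (fcons v u) = kder (D v g) u0 u.
Proof.
rewrite /kder big_ffunS sumF2 -big_split /=; apply: eq_bigr => c _.
rewrite !big_ord_recl !fcons0 scale0r scale1r add0r /D addrC.
have E b : \sum_(i < k) fcons b c (lift ord0 i) *: fcons v u (lift ord0 i)
           = \sum_(i < k) c i *: u i.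
  by apply: eq_bigr => i _; rewrite !fconsS.
by rewrite !E -addrA [v + _]addrC.
Qed.

Lemma kderS' k g u0 (u : {ffun 'I_k.+1 -> vec n}) :
  kder g u0 u = kder (D (u ord0) g) u0 (ftl u).
Proof. by rewrite -kderS fcons_eta. Qed.

Lemma kder_ext k g h u0 (u : {ffun 'I_k -> vec n}) :
  (forall x, g x = h x) -> kder g u0 u = kder h u0 u.
Proof. by move=> E; apply: eq_bigr => c _; rewrite E. Qed.

Lemma kder_add k g h u0 (u : {ffun 'I_k -> vec n}) :
  kder (fun x => g x + h x) u0 u = kder g u0 u + kder h u0 u.
Proof. by rewrite /kder big_split. Qed.

Lemma kder_scal k a g u0 (u : {ffun 'I_k -> vec n}) :
  kder (fun x => a * g x) u0 u = a * kder g u0 u.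
Proof. by rewrite /kder mulr_sumr. Qed.

Lemma kder_sum (I : finType) k (F : I -> boolfun n) u0 (u : {ffun 'I_k -> vec n}) :
  kder (fun x => \sum_(i : I) F i x) u0 u = \sum_(i : I) kder (F i) u0 u.
Proof. by rewrite /kder exchange_big. Qed.

Lemma kder_trans k g w u0 (u : {ffun 'I_k -> vec n}) :
  kder (fun x => g (x + w)) u0 u = kder g (u0 + w) u.
Proof. by apply: eq_bigr => c _; rewrite addrA. Qed.

Lemma kder_zero k u0 (u : {ffun 'I_k -> vec n}) : kder (fun _ => 0) u0 u = 0.
Proof. by rewrite /kder big1. Qed.

Lemma kder_aff k g (M : 'M['F_2]_n) w u0 (u : {ffun 'I_k -> vec n}) :
  kder (fun x => g (M *m x + w)) u0 u = kder g (M *m u0 + w) [ffun i => M *m u i].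
Proof.
apply: eq_bigr => c _; congr (g _).
rewrite mulmxDr addrA mulmx_sumr; congr (_ + _ + _).
by apply: eq_bigr => i _; rewrite ffunE scalemxAr.
Qed.

Lemma Z_ext k g h : (forall x, g x = h x) -> Z k g -> Z k h.
Proof. by move=> E Hg u0 u; rewrite -(kder_ext _ _ E). Qed.

Lemma Z_add k g h : Z k g -> Z k h -> Z k (fun x => g x + h x).
Proof. by move=> Hg Hh u0 u; rewrite kder_add Hg Hh addr0. Qed.

Lemma Z_scal k a g : Z k g -> Z k (fun x => a * g x).
Proof. by move=> Hg u0 u; rewrite kder_scal Hg mulr0. Qed.

Lemma Z_sum (I : finType) k (F : I -> boolfun n) :
  (forall i, Z k (F i)) -> Z k (fun x => \sum_(i : I) F i x).
Proof. by move=> H u0 u; rewrite kder_sum big1 // => i _; apply: H. Qed.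

Lemma Z_trans k g w : Z k g -> Z k (fun x => g (x + w)).
Proof. by move=> Hg u0 u; rewrite kder_trans. Qed.

Lemma Z_zero k : Z k (fun _ => 0).
Proof. by move=> u0 u; rewrite kder_zero. Qed.

Lemma Z0 g : Z 0 g <-> forall x, g x = 0.
Proof.
split=> [H x|H u0 u]; last by rewrite kder0.
by rewrite -(kder0 g x [ffun => 0]) H.
Qed.

Lemma ZS k g : Z k.+1 g <-> forall v, Z k (D v g).
Proof.
split=> [H v u0 u|H u0 u]; first by rewrite -kderS H.
by rewrite kderS' H.
Qed.

Lemma Z_D k g v : Z k g -> Z k (D v g).
Proof. by move=> Hg; apply: Z_add => //; apply: Z_trans. Qed.

Lemma Z_up k g : Z k g -> Z k.+1 g.
Proof. by move=> Hg; apply/ZS => v; apply: Z_D. Qed.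

Lemma Z_le k k' g : (k <= k')%N -> Z k g -> Z k' g.
Proof.
move=> /subnK <-; elim: (k' - k)%N => [|j IH] Hg //=.
by rewrite addSn; apply: Z_up; apply: IH.
Qed.

Lemma Z_aff k g (M : 'M['F_2]_n) w : Z k g -> Z k (fun x => g (M *m x + w)).
Proof. by move=> Hg u0 u; rewrite kder_aff. Qed.

Lemma Z_aff_inv k g (M : 'M['F_2]_n) w : M \in unitmx ->
  Z k (fun x => g (M *m x + w)) -> Z k g.
Proof.
move=> Mu H u0 u.
have := H (invmx M *m (u0 - w)) [ffun i => invmx M *m u i].
rewrite kder_aff mulKVmx // subrK.
have -> : [ffun i => M *m [ffun i0 => invmx M *m u i0] i] = u.
  by apply/ffunP => i; rewrite !ffunE mulKVmx.
by [].
Qed.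

Lemma D_add v w g x : D (v + w) g x = D v g (x + w) + D w g x.
Proof.
rewrite /D [v + w]addrC addrA -!addrA; congr (_ + _).
by rewrite addrA F2_addxx add0r.
Qed.

Lemma D_DD v g x : D v (D v g) x = 0.
Proof.
rewrite /D vec_addK; set a := g x; set b := g (x + v).
by rewrite addrA -(addrA a) F2_addxx addr0 F2_addxx.
Qed.

Lemma D_comm v w g x : D v (D w g) x = D w (D v g) x.
Proof.
rewrite /D [x + v + w]addrAC.
set a := g (x + w + v); set b := g (x + v); set c := g (x + w).
by rewrite -!addrA; congr (_ + _); rewrite !addrA [b + c]addrC.
Qed.

Lemma D0 g x : D 0 g x = 0.
Proof. by rewrite /D addr0 F2_addxx. Qed.

End Kder.
Local Open Scope ring_scope.

Section UV.
Variable n : nat.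
Implicit Types (g h : boolfun n) (v w x : vec n).

Definition mono (S : {set 'I_n}) : boolfun n := fun x => \prod_(i in S) x i 0.
Definition es k (s : 'I_k -> 'I_n) : {ffun 'I_k -> vec n} :=
  [ffun i => delta_mx (s i) 0].

Lemma D_mono_delta j S x :
  D (delta_mx j 0) (mono S) x = if j \in S then mono (S :\ j) x else 0.
Proof.
rewrite /D /mono; case: ifP => jS.
  rewrite !(big_setD1 _ jS) /= !mxE eqxx /= mulrDl mul1r.
  have -> : \prod_(i in S :\ j) (x + delta_mx j 0) i 0 = \prod_(i in S :\ j) x i 0.
    apply: eq_bigr => i; rewrite !inE !mxE => /andP[/negbTE -> _].
    by rewrite addr0.
  by rewrite addrC addrA F2_addxx add0r.
have -> : \prod_(i in S) (x + delta_mx j 0) i 0 = \prod_(i in S) x i 0.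
  apply: eq_bigr => i iS; rewrite !mxE.
  have ij : (i == j) = false by apply/negbTE; apply: contraFN jS => /eqP <-.
  by rewrite ij addr0.
by rewrite F2_addxx.
Qed.

Lemma set_eq_aux (A S : {set 'I_n}) a : a \notin A ->
  ((a \in S) && (S :\ a == A)) = (S == a |: A).
Proof.
move=> aA; apply/idP/idP.
  by case/andP=> aS /eqP <-; rewrite setD1K.
by move/eqP ->; rewrite setU11 /= setU1K.
Qed.

Lemma imset_ordS k (s : 'I_k.+1 -> 'I_n) :
  [set s i | i : 'I_k.+1] = s ord0 |: [set s (lift ord0 j) | j : 'I_k].
Proof.
apply/setP => y; rewrite !inE; apply/imsetP/idP.
  case=> i _ ->; case: (unliftP ord0 i) => [j ->|->]; last by rewrite eqxx.
  by apply/orP; right; apply/imsetP; exists j.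
case/orP=> [/eqP ->|/imsetP [j _ ->]]; first by exists ord0.
by exists (lift ord0 j).
Qed.

Lemma UV k (s : 'I_k -> 'I_n) S : injective s ->
  kder (mono S) 0 (es s) = (S == [set s i | i : 'I_k])%:R.
Proof.
elim: k s S => [|k IH] s S sinj.
  rewrite kder0 /mono.
  have -> : [set s i | i : 'I_0] = set0.
    by apply/setP => y; rewrite inE; apply/negbTE/imsetP => -[[]].
  case: (set_0Vmem S) => [->|[i iS]]; first by rewrite big_set0 eqxx.
  rewrite (big_setD1 _ iS) /= mxE mul0r.
  by have -> : (S == set0) = false by apply/negbTE/set0Pn; exists i.
rewrite kderS' ffunE.
have -> : ftl (es s) = es (fun j => s (lift ord0 j)) by apply/ffunP => j; rewrite !ffunE.
have sinj' : injective (fun j => s (lift ord0 j)) by move=> a b /sinj /lift_inj.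
rewrite (kder_ext _ _ (D_mono_delta (s ord0) S)).
rewrite imset_ordS -set_eq_aux; last first.
  by apply/imsetP => -[j _ /sinj E]; have := neq_lift ord0 j; rewrite -E eqxx.
case: (s ord0 \in S) => /=; first by rewrite IH.
by rewrite kder_zero.
Qed.

Lemma kder_anf k (s : 'I_k -> 'I_n) a : injective s ->
  kder (anf_eval a) 0 (es s) = a [set s i | i : 'I_k].
Proof.
move=> sinj; rewrite /anf_eval.
rewrite (kder_sum (fun S x => a S * \prod_(i in S) x i 0)).
rewrite (bigD1 [set s i | i : 'I_k]) //= big1 ?addr0.
  by rewrite kder_scal (UV _ sinj) eqxx mulr1.
by move=> S /negbTE HS; rewrite kder_scal (UV _ sinj) HS mulr0.
Qed.

Lemma enum_set (S : {set 'I_n}) m : #|S| = m ->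
  exists s : 'I_m -> 'I_n, injective s /\ [set s i | i : 'I_m] = S.
Proof.
move=> e; exists (fun i => enum_val (cast_ord (esym e) i)); split.
  by move=> i j /enum_val_inj /cast_ord_inj.
apply/setP => x; apply/imsetP/idP.
  by case=> i _ ->; apply: enum_valP.
move=> xS; exists (cast_ord e (enum_rank_in xS x)) => //.
by rewrite cast_ordK enum_rankK_in.
Qed.

Lemma enum_set0 (S : {set 'I_n}) m (x : 'I_n) : #|S| = m.+1 -> x \in S ->
  exists s : 'I_m.+1 -> 'I_n, [/\ injective s, [set s i | i : 'I_m.+1] = S & s ord0 = x].
Proof.
move=> e xS; have [s [sinj sS]] := enum_set e.
have : x \in [set s i | i : 'I_m.+1] by rewrite sS.
case/imsetP=> j _ xE.
exists (fun i => s (tperm ord0 j i)); split.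
- by move=> a b /sinj /perm_inj.
- rewrite -sS; apply/setP => y; apply/imsetP/imsetP => -[i _ ->].
    by exists (tperm ord0 j i).
  by exists (tperm ord0 j i) => //; rewrite tpermK.
- by rewrite tpermL.
Qed.

Lemma anf_exists g : exists a : {set 'I_n} -> 'F_2, forall x, g x = anf_eval a x.
Proof.
pose F := fun a : {ffun {set 'I_n} -> 'F_2} => [ffun x : vec n => anf_eval a x].
have Finj : injective F.
  move=> a b E; apply/ffunP => S.
  have [s [sinj sS]] := enum_set (erefl #|S|).
  rewrite -sS -!(kder_anf _ sinj).
  by apply: kder_ext => x; move/ffunP: E => /(_ x); rewrite !ffunE.
have := inj_card_onto Finj _ [ffun x => g x].
have c1 : #|{: {set 'I_n}}| = (2 ^ n)%N.
  by rewrite -cardsT -powersetT card_powerset cardsT card_ord.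
have c2 : #|{: vec n}| = (2 ^ n)%N by rewrite card_mx card_Fp // muln1.
rewrite !card_ffun c1 c2 leqnn.
move=> /(_ isT) /codomP [a Ea]; exists a => x.
by move/ffunP: Ea => /(_ x); rewrite !ffunE.
Qed.

End UV.
Section Deg.
Variable n : nat.
Implicit Types (g h q : boolfun n) (v w x : vec n).

Lemma Zmul m (i : 'I_n) q : Z m q -> Z m.+1 (fun x => x i 0 * q x).
Proof.
elim: m q => [|m IH] q Hq; apply/ZS => w.
  apply: (@Z_ext _ _ (fun x => w i 0 * q (x + w) + x i 0 * D w q x)).
    by move=> x; rewrite /D !mxE; ring.
  apply: Z_add; first by apply: Z_scal; apply: Z_trans.
  apply: (@Z_ext _ _ (fun _ => 0)); last exact: Z_zero.
  by move/Z0: Hq => Hq x; rewrite /D !Hq addr0 mulr0.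
apply: (@Z_ext _ _ (fun x => w i 0 * q (x + w) + x i 0 * D w q x)).
  by move=> x; rewrite /D !mxE; ring.
apply: Z_add; first by apply: Z_scal; apply: Z_trans.
by apply: IH; move/ZS: Hq.
Qed.

Lemma Zmono_set (S : {set 'I_n}) : Z #|S|.+1 (mono S).
Proof.
move: (erefl #|S|); move: {2}#|S| => m; elim: m S => [|m IH] S e.
  have -> : S = set0 by apply/eqP; rewrite -cards_eq0 e.
  rewrite cards0; apply/ZS => v; apply/Z0 => x; rewrite /D /mono !big_set0.
  by rewrite F2_addxx.
have [i iS] : exists i, i \in S by apply/set0Pn; rewrite -card_gt0 e.
apply: (@Z_ext _ _ (fun x => x i 0 * mono (S :\ i) x)).
  by move=> x; rewrite /mono (big_setD1 _ iS).
rewrite (cardsD1 i S) iS add1n; apply: Zmul; apply: IH.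
by move: e; rewrite (cardsD1 i S) iS add1n => -[].
Qed.

Lemma deg_le_Z g d : deg_le g d -> Z d.+1 g.
Proof.
case=> a [Ha Eg].
apply: (@Z_ext _ _ (anf_eval a)); first by move=> x; rewrite Eg.
apply: (@Z_sum _ _ _ (fun S x => a S * \prod_(i in S) x i 0)) => S.
case: (eqVneq (a S) 0) => [->|/Ha HS].
  by apply: (@Z_ext _ _ (fun _ => 0)) => [x|]; [rewrite mul0r | apply: Z_zero].
apply: Z_scal; apply: (@Z_le _ #|S|.+1); [exact: HS | exact: Zmono_set].
Qed.

Lemma Z_deg_le g d : Z d.+1 g -> deg_le g d.
Proof.
move=> Hg; have [a Ea] := anf_exists g.
have a0 (S : {set 'I_n}) : (d < #|S|)%N -> a S = 0.
  move=> HS; have [s [sinj sS]] := enum_set (erefl #|S|).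
  rewrite -sS -(kder_anf _ sinj).
  rewrite (kder_ext _ _ (fun x => esym (Ea x))).
  by apply: (Z_le HS Hg).
exists (fun S : {set 'I_n} => if (#|S| <= d)%N then a S else 0); split.
  by move=> S0; rewrite /=; case: ifP => // _; rewrite eqxx.
move=> x; rewrite Ea /anf_eval; apply: eq_bigr => S _.
case: ifP => // /negbT; rewrite -ltnNge => /a0 ->.
by rewrite !mul0r.
Qed.

End Deg.
Section Count.
Variable n : nat.
Implicit Types (g h q : boolfun n) (v w x : vec n).

Definition cnt k g := #|[set p : vec n * {ffun 'I_k -> vec n} | kder g p.1 p.2 != 0]|.

Lemma dtE k g : dt k g = (cnt k g)%:R / (2 ^ (k.+1 * n))%:R.
Proof. by []. Qed.

Lemma card_vec : #|{: vec n}| = (2 ^ n)%N.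
Proof. by rewrite card_mx card_Fp // muln1. Qed.

Lemma cnt_sum k g : cnt k g =
  (\sum_(x : vec n) \sum_(u : {ffun 'I_k -> vec n}) (kder g x u != 0%R))%N.
Proof.
rewrite /cnt -sum1_card big_mkcond pair_big /=; apply: eq_bigr => -[x u] _.
by rewrite inE /=; case: (_ != 0).
Qed.

Lemma cntS k g : cnt k.+1 g = (\sum_(v : vec n) cnt k (D v g))%N.
Proof.
rewrite cnt_sum.
transitivity (\sum_(x : vec n) \sum_(v : vec n) \sum_(u : {ffun 'I_k -> vec n})
               (kder (D v g) x u != 0%R))%N.
  apply: eq_bigr => x _; rewrite big_ffunS; apply: eq_bigr => v _.
  by apply: eq_bigr => u _; rewrite kderS.
by rewrite exchange_big; apply: eq_bigr => v _; rewrite cnt_sum.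
Qed.

Lemma pow2_gt0 m : (0 : rat) < (2 ^ m)%:R.
Proof. by rewrite ltr0n expn_gt0. Qed.

Lemma dtS k g : dt k.+1 g = 1 / (2 ^ n)%:R * \sum_(v : vec n) dt k (D v g).
Proof.
rewrite !dtE cntS natr_sum mulr_suml mulr_sumr; apply: eq_bigr => v _.
rewrite mulSn expnD natrM.
have h1 := pow2_gt0 n; have h2 := pow2_gt0 (k.+1 * n).
by rewrite dtE invfM mul1r mulrCA.
Qed.

Lemma dt_Z k g : Z k g -> dt k g = 0.
Proof.
move=> Hg; rewrite dtE cnt_sum big1 ?mul0r // => x _.
by rewrite big1 // => u _; rewrite Hg eqxx.
Qed.

Definition Zb k g := [forall u0 : vec n, forall u : {ffun 'I_k -> vec n}, kder g u0 u == 0].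
Lemma ZbP k g : reflect (Z k g) (Zb k g).
Proof.
apply: (iffP forallP) => H.
  by move=> u0 u; apply/eqP; move/forallP: (H u0); apply.
by move=> u0; apply/forallP => u; apply/eqP; apply: H.
Qed.

Definition V0 k g := [set v : vec n | Zb k.-1 (D v g)].

Definition prodk k := \prod_(i < k) (1 - 1 / (2 ^ i.+1)%:R : rat).

Lemma prodk_gt0 k : 0 < prodk k.
Proof.
rewrite /prodk; elim/big_ind: _ => // [x y|i _]; first exact: mulr_gt0.
rewrite subr_gt0 ltr_pdivrMr ?pow2_gt0 // mul1r ltr1n.
by rewrite -{1}(expn0 2) ltn_exp2l.
Qed.

Lemma F2_add_eq0 (a b : 'F_2) : a + b = 0 -> a = b.
Proof. by move=> H; rewrite -[a]addr0 -(F2_addxx b) addrA H add0r. Qed.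

Lemma Z1_const g : Z 1 g -> forall x, g x = g 0.
Proof.
move/ZS => H x; move/Z0: (H x) => /(_ 0).
by rewrite /D add0r => /F2_add_eq0.
Qed.

Lemma main_base g : Z 1 g -> ~ Z 0 g ->
  [/\ dt 0 g = 1, V0 0 g = setT & forall x, g x != 0].
Proof.
move=> H1 H0.
have gc := Z1_const H1.
have g0 : g 0 != 0.
  apply/negP => /eqP E; apply: H0; apply/Z0 => x; by rewrite gc.
have gnz x : g x != 0 by rewrite gc.
split => //.
  rewrite dtE cnt_sum.
  have -> : (\sum_(x : vec n) \sum_(u : {ffun 'I_0 -> vec n}) (kder g x u != 0%R))%N
            = (\sum_(x : vec n) 1)%N.
    by apply: eq_bigr => x _; rewrite (big_ffun0 _ _ [ffun => 0]) kder0 gnz.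
  rewrite sum1_card card_vec mul1n.
  by rewrite divff // gt_eqF // pow2_gt0.
apply/setP => v; rewrite !inE; apply/ZbP/Z0 => x.
by rewrite /D !gc F2_addxx.
Qed.

End Count.
Section Main.
Variable n : nat.
Implicit Types (g h q : boolfun n) (v w x : vec n).

Lemma V0_add m g a b : a \in V0 m.+1 g -> b \in V0 m.+1 g -> a + b \in V0 m.+1 g.
Proof.
rewrite !inE => /ZbP Ha /ZbP Hb; apply/ZbP.
apply: (@Z_ext _ _ (fun x => D a g (x + b) + D b g x)); first by move=> x; rewrite D_add.
by apply: Z_add => //; apply: Z_trans.
Qed.

Lemma V0_0 m g : 0 \in V0 m.+1 g.
Proof.
rewrite inE; apply/ZbP; apply: (@Z_ext _ _ (fun _ => 0)); last exact: Z_zero.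
by move=> x; rewrite D0.
Qed.

Lemma V0_incl m g v w : Z m.+2 g -> w \in V0 m.+1 g -> w \in V0 m (D v g).
Proof.
rewrite !inE => Hg /ZbP Hw; apply/ZbP.
case: m Hg Hw => [|m] Hg Hw /=.
  by move/ZS: Hg => /(_ v) /ZS /(_ w).
apply: (@Z_ext _ _ (D v (D w g))); first by move=> x; rewrite D_comm.
by move/ZS: Hw.
Qed.

Lemma V0_incl2 m g v w : Z m.+2 g -> w + v \in V0 m.+1 g -> w \in V0 m (D v g).
Proof.
move=> Hg /(V0_incl v Hg); rewrite !inE => /ZbP H; apply/ZbP.
apply: (@Z_ext _ _ (D (w + v) (D v g))) => // x.
have E : v + (w + v) = w by rewrite addrC vec_addK.
by rewrite -[in RHS]E (D_add v (w + v)) D_DD add0r.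
Qed.

Lemma card_V0_double m g v : Z m.+2 g -> v \notin V0 m.+1 g ->
  (2 * #|V0 m.+1 g| <= #|V0 m (D v g)|)%N.
Proof.
move=> Hg vV.
set A := V0 m.+1 g; set B := (fun w => w + v) @^-1: A.
have cB : #|B| = #|A| by rewrite card_preimset //; apply: addIr.
have AB : A :&: B = set0.
  apply/setP => w; rewrite in_setI in_set0; apply/negbTE; apply/negP => /andP [wA].
  rewrite /B in_set => wvA.
  by move: (V0_add wA wvA); rewrite addrA [w + w]vec_addxx add0r (negbTE vV).
have : A :|: B \subset V0 m (D v g).
  apply/subsetP => w; rewrite in_setU => /orP [wA|]; last rewrite /B in_set => wvA.
    exact: V0_incl.
  exact: V0_incl2.
move/subset_leq_card; rewrite cardsU AB cards0 subn0 cB.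
by rewrite mul2n -addnn.
Qed.

Lemma dtS_split m g : dt m.+1 g =
  1 / (2 ^ n)%:R * \sum_(v in ~: V0 m.+1 g) dt m (D v g).
Proof.
rewrite dtS (bigID (fun v => v \in V0 m.+1 g)) /= big1 ?add0r.
  by congr (_ * _); apply: eq_bigl => v; rewrite in_setC.
move=> v; rewrite inE => /ZbP H; exact: dt_Z.
Qed.

Lemma divle (a N K : nat) : (0 < N)%N -> (0 < K)%N ->
  ((a%:R / N%:R : rat) <= 1 / K%:R) = (a * K <= N)%N.
Proof.
move=> hN hK.
by rewrite ler_pdivrMr ?ltr0n // div1r mulrC ler_pdivlMr ?ltr0n // -natrM ler_nat.
Qed.

Lemma divge (a N K : nat) : (0 < N)%N -> (0 < K)%N ->
  ((1 / K%:R : rat) <= a%:R / N%:R) = (N <= a * K)%N.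
Proof.
move=> hN hK.
by rewrite ler_pdivlMr ?ltr0n // mulrAC ler_pdivrMr ?ltr0n // mul1r -natrM ler_nat.
Qed.

Lemma main m : forall g, Z m.+1 g -> ~ Z m g ->
  [/\ prodk m <= dt m g, (#|V0 m g| * 2 ^ m <= 2 ^ n)%N &
      (dt m g = prodk m <-> (#|V0 m g| * 2 ^ m = 2 ^ n)%N)].
Proof.
elim: m => [|m IH] g Hg Hng.
  have [d1 V1 _] := main_base Hg Hng.
  rewrite d1 V1 /prodk big_ord0 cardsT card_vec expn0 muln1; split => //.
set V := V0 m.+1 g.
have IHv v : v \notin V -> [/\ prodk m <= dt m (D v g),
      (#|V0 m (D v g)| * 2 ^ m <= 2 ^ n)%N &
      (dt m (D v g) = prodk m <-> (#|V0 m (D v g)| * 2 ^ m = 2 ^ n)%N)].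
  move=> vV; apply: IH; first by move/ZS: Hg.
  by move=> H; move: vV; rewrite inE => /negP; apply; apply/ZbP.
have [v0 v0V] : exists v0, v0 \notin V.
  case: (set_0Vmem (~: V)) => [E|[v0]]; last by rewrite inE => ?; exists v0.
  exfalso; apply: Hng; apply/ZS => v.
  have : v \in V by rewrite -[V]setCK E setC0 in_setT.
  by rewrite inE => /ZbP.
have bound : (#|V| * 2 ^ m.+1 <= 2 ^ n)%N.
  have [_ b _] := IHv v0 v0V.
  apply: leq_trans b; rewrite expnS mulnA [(#|V| * 2)%N]mulnC leq_mul2r.
  by rewrite card_V0_double ?orbT.
have hN : (0 < 2 ^ n)%N by rewrite expn_gt0.
have hK : (0 < 2 ^ m.+1)%N by rewrite expn_gt0.
set N := (2 ^ n)%N.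
set c := #|V|.
have cC : #|~: V| = (N - c)%N by rewrite cardsCs setCK card_vec.
have cN : (c <= N)%N.
  by apply: leq_trans bound; rewrite leq_pmulr.
have sum_ge : (N - c)%:R * prodk m <= \sum_(v in ~: V) dt m (D v g).
  rewrite -cC mulr_natl -sumr_const.
  by apply: ler_sum => v; rewrite inE => /IHv [].
have dtk : dt m.+1 g = 1 / N%:R * \sum_(v in ~: V) dt m (D v g) by apply: dtS_split.
have pk : prodk m.+1 = prodk m * (1 - 1 / (2 ^ m.+1)%:R) by rewrite /prodk big_ord_recr.
have Pm := prodk_gt0 m.
have Nr : (0 : rat) < N%:R by rewrite ltr0n.
have u_le : c%:R / N%:R <= 1 / (2 ^ m.+1)%:R :> rat by rewrite divle.
have lowb : (1 - c%:R / N%:R) * prodk m <= dt m.+1 g.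
  rewrite dtk; rewrite natrB // in sum_ge.
  have -> : (1 - c%:R / N%:R) * prodk m = 1 / N%:R * ((N%:R - c%:R) * prodk m).
    by field; rewrite gt_eqF.
  by apply: ler_wpM2l => //; rewrite divr_ge0 // ler0n.
set t := 1 / (2 ^ m.+1)%:R : rat; set u := c%:R / N%:R : rat.
split => //.
  by rewrite pk; apply: le_trans lowb; nra.
split => [E|E].
  apply/eqP; rewrite eqn_leq bound /= -divge //.
  move: lowb; rewrite E pk => H.
  nra.
have ut : u = t.
  apply/eqP; rewrite eq_le divle // E leqnn /= /t /u divge // E leqnn.
  by [].
have eqv v : v \in ~: V -> dt m (D v g) = prodk m.
  rewrite inE => vV; have [_ b [_ ->]] := IHv v vV => //.
  apply/eqP; rewrite eqn_leq b /= -/N -E expnS mulnA [(c * 2)%N]mulnC leq_mul2r.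
  by rewrite card_V0_double ?orbT.
rewrite dtk (eq_bigr _ eqv) sumr_const cC -[prodk m *+ _]mulr_natl natrB // pk -/t -ut /u.
by field; rewrite gt_eqF.
Qed.
End Main.
Section Upper.
Variable n : nat.
Implicit Types (g h q : boolfun n) (v w x : vec n).

Lemma upper m : forall g, Z m.+2 g ->
  dt m.+1 g <= 1 / 2 * (1 - 1 / (2 ^ n)%:R) ^+ m.
Proof.
have hN : (0 < 2 ^ n)%N by rewrite expn_gt0.
have Nr : (0 : rat) < (2 ^ n)%:R by rewrite ltr0n.
elim: m => [|m IH] g Hg; rewrite dtS_split.
  set V := V0 1 g.
  have dv v : v \in ~: V -> dt 0 (D v g) = 1.
    rewrite !inE => /ZbP vV; move/ZS: Hg => /(_ v) H1.
    by have [] := main_base H1 vV.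
  have nz v x : v \in ~: V -> D v g x = 1.
    rewrite !inE => /ZbP vV; move/ZS: Hg => /(_ v) H1.
    by have [_ _ /(_ x) /F2_neq0] := main_base H1 vV.
  have cle : (#|~: V| <= #|V|)%N.
    case: (set_0Vmem (~: V)) => [->|[v0 v0V]]; first by rewrite cards0.
    rewrite -(card_imset (~: V) (addIr v0)).
    apply: subset_leq_card; apply/subsetP => y /imsetP [w wV ->].
    rewrite inE; apply/ZbP/Z0 => x.
    by rewrite D_add !nz // F2_addxx.
  have cC := cardsC V; rewrite card_vec in cC.
  rewrite (eq_bigr _ dv) sumr_const expr0 mulr1.
  rewrite !div1r mulrC ler_pdivrMr ?ltr0n // ler_pdivlMl ?ltr0n // -natrM ler_nat.
  by rewrite -cC mul2n -addnn leq_add2r.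
set V := V0 m.+2 g.
set B := 1 / 2 * (1 - 1 / (2 ^ n)%:R : rat) ^+ m.
have dv v : v \in ~: V -> dt m.+1 (D v g) <= B.
  by move=> _; apply: IH; move/ZS: Hg.
have cle : (#|~: V| <= 2 ^ n - 1)%N.
  have := cardsC V; rewrite card_vec => <-.
  rewrite addnC -addnBA; first exact: leq_addr.
  by rewrite card_gt0; apply/set0Pn; exists 0; apply: V0_0.
have B0 : 0 <= B by rewrite /B mulr_ge0 // exprn_ge0 // subr_ge0 ler_pdivrMr // mul1r ler1n.
apply: (@le_trans _ _ (1 / (2 ^ n)%:R * (B *+ #|~: V|))).
  apply: ler_wpM2l; first by rewrite divr_ge0 // ler0n.
  by rewrite -sumr_const; apply: ler_sum.
rewrite exprS /B -[_ *+ #|~: V|]mulr_natr.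
have : (#|~: V|%:R : rat) <= (2 ^ n)%:R - 1.
  by rewrite -[1 in X in _ <= X]/(1%:R) -natrB ?expn_gt0 // ler_nat.
move: (#|~: V|%:R : rat) => c hc.
set P := (1 - 1 / (2 ^ n)%:R : rat) ^+ m.
have P0 : 0 <= P by rewrite exprn_ge0 // subr_ge0 ler_pdivrMr // mul1r ler1n.
set N := ((2 ^ n)%:R : rat) in Nr hc *.
have -> : 1 / N * (1 / 2 * P * c) = 1 / 2 * P * (c / N) by field; rewrite gt_eqF.
have h2 : (0 : rat) <= 1 / 2 by [].
rewrite -mulrA; apply: (ler_wpM2l h2).
rewrite [X in _ <= X]mulrC; apply: (ler_wpM2l P0).
by rewrite ler_pdivrMr // mulrBl !mul1r mulVf ?gt_eqF.
Qed.
End Upper.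
Section Mx.
Variable n : nat.

Lemma mx_complete (m : nat) (A : 'M['F_2]_(m, n)) :
  exists P : 'M['F_2]_n, P \in unitmx /\
    forall x : 'I_n, (n - \rank A <= x)%N -> (row x P <= A)%MS.
Proof.
set r := \rank A.
have e : (\rank (A^C)%MS + r = n)%N by rewrite mxrank_compl subnK // rank_leq_col.
set Q := col_mx (row_base (A^C)%MS) (row_base A).
exists (castmx (e, erefl n) Q); split.
  rewrite -row_full_unit /row_full (eqmx_cast Q (e, erefl n)).
  rewrite -(addsmxE (row_base (A^C)%MS) (row_base A)).
  rewrite (adds_eqmx (eq_row_base (A^C)%MS) (eq_row_base A)) addsmxC.
  exact: addsmx_compl_full.
move=> x hx.
have hj : (x - \rank (A^C)%MS < r)%N.
  rewrite mxrank_compl ltn_subLR; last by apply: leq_trans hx; rewrite leq_sub2l // rank_leq_col.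
  by rewrite subnK ?rank_leq_col // ltn_ord.
have -> : row x (castmx (e, erefl n) Q) = row (Ordinal hj) (row_base A).
  apply/matrixP => i j; rewrite [LHS]mxE [RHS]mxE castmxE /=.
  have -> : cast_ord (esym e) x = rshift (\rank (A^C)%MS) (Ordinal hj).
    apply/val_inj => /=; rewrite subnKC //.
    by apply: leq_trans hx; rewrite mxrank_compl.
  by rewrite cast_ord_id /Q col_mxEd.
by apply: submx_trans (row_sub _ _) _; rewrite eq_row_base.
Qed.

Lemma trD (a b : 'rV['F_2]_n) : (a + b)^T = a^T + b^T.
Proof. by apply/matrixP => i j; rewrite !mxE. Qed.

Lemma mx_V (V : {set vec n}) k : 0 \in V ->
  (forall a b, a \in V -> b \in V -> a + b \in V) -> (2 ^ n <= #|V| * 2 ^ k)%N ->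
  exists M : 'M['F_2]_n, M \in unitmx /\
    forall x : 'I_n, (k <= x)%N -> M *m delta_mx x 0 \in V.
Proof.
move=> V0 Vadd hV.
pose A := \matrix_(i < #|V|, j < n) (enum_val i : vec n) j 0.
have rowA i : (row i A)^T = enum_val i.
  by apply/matrixP => a b; rewrite !mxE (ord1 b).
have R1 (r : 'rV_n) : (r <= A)%MS -> r^T \in V.
  case/submxP => Dm ->; rewrite mulmx_sum_row.
  apply: (big_ind (fun r : 'rV_n => r^T \in V)).
  - by rewrite trmx0.
  - by move=> a b Ha Hb; rewrite trD; apply: Vadd.
  - move=> i _; case: (F2_cases (Dm 0 i)) => ->.
      by rewrite scale0r trmx0.
    by rewrite scale1r rowA enum_valP.
have R2 : (n - \rank A <= k)%N.
  have sub : V \subset [set (w *m row_base A)^T | w : 'rV_(\rank A)].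
    apply/subsetP => v vV.
    have : ((row (enum_rank_in vV v) A) <= row_base A)%MS.
      by rewrite eq_row_base row_sub.
    case/submxP => w Ew; apply/imsetP; exists w => //.
    by rewrite -Ew rowA enum_rankK_in.
  have cV : (#|V| <= 2 ^ \rank A)%N.
    apply: leq_trans (subset_leq_card sub) _.
    apply: leq_trans (leq_imset_card _ _) _.
    by rewrite card_mx card_Fp // mul1n.
  have : (2 ^ n <= 2 ^ (\rank A + k))%N.
    by apply: leq_trans hV _; rewrite expnD leq_mul2r cV orbT.
  by rewrite leq_exp2l // leq_subLR.
have [P [Pu HP]] := mx_complete A.
exists P^T; split; first by rewrite unitmx_tr.
move=> x hx; rewrite -colE -tr_row; apply: R1; apply: HP.
exact: leq_trans R2 hx.
Qed.

End Mx.
Lemma F2_4 (a b c d : 'F_2) : (a + b) + (c + d) + (a + c) = b + d.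
Proof.
by case: (F2_cases a) => ->; case: (F2_cases b) => ->; case: (F2_cases c) => ->;
  case: (F2_cases d) => ->; apply/val_inj.
Qed.

Section Equiv.
Variables (n k' : nat).
Hypothesis kn : (k'.+1 <= n)%N.
Local Notation k := k'.+1.
Implicit Types (g h q f : boolfun n) (v w x : vec n).

Definition K0 := [set i : 'I_n | (i < k)%N].

Lemma monomE x : @monom n k x = mono K0 x.
Proof. by rewrite /monom /mono; apply: eq_bigl => i; rewrite inE. Qed.

Lemma card_K0 : #|K0| = k.
Proof.
have -> : K0 = widen_ord kn @: [set: 'I_k].
  apply/setP => i; rewrite inE; apply/idP/imsetP => [hi|[j _ ->]]; last exact: (ltn_ord j).
  by exists (Ordinal hi) => //; apply/val_inj.
have winj : injective (@widen_ord k n kn) by move=> a b /(congr1 val) /= E; apply/val_inj.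
by rewrite (card_imset _ winj) cardsT card_ord.
Qed.

Lemma deg_le_coef g d : (forall S : {set 'I_n}, (d < #|S|)%N ->
    exists m (s : 'I_m -> 'I_n),
      [/\ injective s, [set s i | i : 'I_m] = S & kder g 0 (es s) = 0]) ->
  deg_le g d.
Proof.
move=> H; have [a Ea] := anf_exists g.
have a0 (S : {set 'I_n}) : (d < #|S|)%N -> a S = 0.
  move=> /H [m [s [sinj sS E]]].
  rewrite -sS -(kder_anf _ sinj) -E.
  by apply: kder_ext => x; rewrite Ea.
exists (fun S : {set 'I_n} => if (#|S| <= d)%N then a S else 0); split.
  by move=> S0; rewrite /=; case: ifP => // _; rewrite eqxx.
move=> x; rewrite Ea /anf_eval; apply: eq_bigr => S _.
case: ifP => // /negbT; rewrite -ltnNge => /a0 ->.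
by rewrite !mul0r.
Qed.

Lemma Dh_eq f h (M : 'M['F_2]_n) w v y : (forall x, h x = f (M *m x + w)) ->
  D v h y = D (M *m v) f (M *m y + w).
Proof. by move=> Eh; rewrite /D !Eh mulmxDr addrAC. Qed.

Lemma affeq_V0 f : (#|V0 k f| * 2 ^ k <= 2 ^ n)%N ->
  affeq_mod k' f (@monom n k) -> (#|V0 k f| * 2 ^ k = 2 ^ n)%N.
Proof.
move=> Hle [h [[M [w [Mu Eh]]] /deg_le_Z Hmh]].
set W := [set x : vec n | [forall i : 'I_n, (i < k)%N ==> (x i 0 == 0)]].
have E : (k + (n - k) = n)%N by rewrite subnKC.
pose ext (y : 'cV['F_2]_(n - k)) : vec n :=
  castmx (E, erefl 1%N) (col_mx (0 : 'cV['F_2]_k) y).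
have extE y (i : 'I_(n - k)) : ext y (cast_ord E (rshift k i)) 0 = y i 0.
  by rewrite castmxE cast_ordK cast_ord_id col_mxEd.
have ext_inj : injective ext.
  move=> y1 y2 e; apply/matrixP => i j; rewrite (ord1 j) -!extE.
  by rewrite e.
have cW : (2 ^ (n - k) <= #|W|)%N.
  have <- : #|[set ext y | y : 'cV['F_2]_(n - k)]| = (2 ^ (n - k))%N.
    by rewrite card_imset // card_mx card_Fp // muln1.
  apply: subset_leq_card; apply/subsetP => x /imsetP [y _ ->].
  rewrite inE; apply/forallP => i; apply/implyP => hi.
  rewrite castmxE cast_ord_id.
  have -> : cast_ord (esym E) i = lshift (n - k) (Ordinal hi) by apply/val_inj.
  by rewrite col_mxEu mxE.
have WV : W \subset V0 k (@monom n k).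
  apply/subsetP => x; rewrite !inE => /forallP Hx; apply/ZbP.
  apply: (@Z_ext _ _ (fun _ => 0)); last exact: Z_zero.
  move=> y; rewrite /D.
  have -> : @monom n k (y + x) = @monom n k y.
    apply: eq_bigr => i hi; rewrite mxE.
    by move/implyP: (Hx i) => /(_ hi) /eqP ->; rewrite addr0.
  by rewrite F2_addxx.
have Vmh : V0 k (@monom n k) \subset V0 k h.
  apply/subsetP => v; rewrite !inE => /ZbP Hv; apply/ZbP.
  move/ZS: Hmh => /(_ v) H1.
  apply: (@Z_ext _ _ (fun y => D v (fun x => @monom n k x + h x) y + D v (@monom n k) y)).
    by move=> y; rewrite /D F2_4.
  exact: Z_add.
have chf : (#|V0 k h| <= #|V0 k f|)%N.
  rewrite -(card_imset (V0 k h) (can_inj (mulKmx Mu))).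
  apply: subset_leq_card; apply/subsetP => y /imsetP [v]; rewrite !inE => /ZbP Hv ->.
  apply/ZbP; apply: (Z_aff_inv (w := w) Mu).
  by apply: Z_ext Hv => y'; rewrite (Dh_eq _ _ Eh).
apply/eqP; rewrite eqn_leq Hle /=.
have -> : (2 ^ n = 2 ^ (n - k) * 2 ^ k)%N by rewrite -expnD subnK.
rewrite leq_mul2r; apply/orP; right.
apply: leq_trans cW _; apply: leq_trans chf.
apply: leq_trans (subset_leq_card Vmh).
exact: subset_leq_card.
Qed.

Lemma V0_affeq f : Z k.+1 f -> ~ Z k f ->
  (#|V0 k f| * 2 ^ k = 2 ^ n)%N -> affeq_mod k' f (@monom n k).
Proof.
move=> Hf Hnf Hc.
have [M [Mu HM]] := @mx_V n (V0 k f) k (V0_0 _ _) (fun a b => @V0_add _ _ _ a b)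
   (eq_leq (esym Hc)).
pose h := fun x : vec n => f (M *m x + 0).
have Eh : forall x, h x = f (M *m x + 0) by [].
have Hh1 : Z k.+1 h by apply: Z_aff.
have Hnh : ~ Z k h by move=> H; apply: Hnf; apply: (Z_aff_inv Mu H).
have ex (x : 'I_n) : (k <= x)%N -> Z k' (D (delta_mx x 0) h).
  move=> hx; have := HM x hx; rewrite inE => /ZbP H.
  have := Z_aff M 0 H; apply: Z_ext => y.
  by rewrite (Dh_eq _ _ Eh).
have good (S : {set 'I_n}) : #|S| = k -> S != K0 ->
    exists s : 'I_k -> 'I_n, [/\ injective s, [set s i | i : 'I_k] = S,
      kder h 0 (es s) = 0 & kder (mono K0) 0 (es s) = 0].
  move=> cS SK.
  have : ~~ (S \subset K0).
    apply: contra SK => sub; rewrite eqEcard sub card_K0 cS leqnn.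
    by [].
  case/subsetPn => x xS; rewrite inE -leqNgt => xk.
  have [s [sinj sS s0]] := enum_set0 cS xS.
  exists s; split => //.
    rewrite kderS' ffunE s0; exact: ex.
  by rewrite (UV _ sinj) sS eq_sym (negbTE SK).
have [s0 [s0inj s0S]] := enum_set card_K0.
have h1 : kder h 0 (es s0) = 1.
  apply: F2_neq0; apply/eqP => H0; apply: Hnh.
  apply: deg_le_Z; apply: deg_le_coef => S hS.
  case: (ltngtP #|S| k) => [|lt|eqS]; first by rewrite ltnNge hS.
    have [s [sinj sS]] := enum_set (erefl #|S|).
    exists #|S|, s; split => //.
    exact: (Z_le lt Hh1).
  case: (eqVneq S K0) => [->|SK].
    by exists k, s0.
  have [s [? ? ? ?]] := good S eqS SK.
  by exists k, s.
exists h; split; first by exists M, 0.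
apply: deg_le_coef => S hS.
have Hm : Z k.+1 (@monom n k).
  by apply: (Z_ext (fun x => esym (monomE x))); rewrite -{1}card_K0; apply: Zmono_set.
case: (ltngtP #|S| k) => [|lt|eqS]; first by rewrite ltnNge hS.
  have [s [sinj sS]] := enum_set (erefl #|S|).
  exists #|S|, s; split => //.
  exact: (Z_le lt (Z_add Hm Hh1)).
case: (eqVneq S K0) => [->|SK].
  exists k, s0; split => //.
  rewrite kder_add h1 (kder_ext _ _ monomE) (UV _ s0inj) s0S eqxx.
  exact: F2_addxx.
have [s [sinj sS Hs1 Hs2]] := good S eqS SK.
exists k, s; split => //.
by rewrite kder_add Hs1 (kder_ext _ _ monomE) Hs2 addr0.
Qed.

End Equiv.

Theorem theorem2 (n k : nat) (f : 'cV['F_2]_n -> 'F_2) :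
  (1 <= k)%N -> (k <= n)%N -> deg_eq f k ->
  [/\ \prod_(i < k) (1 - 1 / (2 ^ i.+1)%:R) <= dt k f,
      dt k f <= 1 / 2 * (1 - 1 / (2 ^ n)%:R) ^+ k.-1
    & dt k f = \prod_(i < k) (1 - 1 / (2 ^ i.+1)%:R :> rat)
        <-> affeq_mod k.-1 f (@monom n k)].
Proof.
case: k => [|k'] // _ kn [Hle Hnle].
have Hf : Z k'.+2 f := deg_le_Z Hle.
have Hnf : ~ Z k'.+1 f by move=> H; apply: Hnle; exact: Z_deg_le.
have [lb vb iff] := main Hf Hnf.
split => //; first exact: upper.
split => [E|A].
  apply: V0_affeq => //; exact/iff.
by apply/iff; apply: affeq_V0.
Qed.
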